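(* Let $G$ be a Frattini-injective pro-$p$ group, $x,y\in G$ and $\alpha,\beta\in\mathbb{Z}_p\setminus\{0\}$. Then: (i) if $G$ is virtually abelian, then $G$ is abelian; (ii) the centralizer of every element of $G$ is isolated in $G$; (iii) if $x^\alpha$ and $y^\beta$ commute, then $x$ and $y$ commute; (iv) if $x^\alpha = y^\alpha$, then $x=y$.
   Context: $p$ is a prime; subgroups are closed. A pro-$p$ group $G$ is Frattini-injective if distinct finitely generated subgroups of $G$ have distinct Frattini subgroups. A subgroup $H$ of $G$ is isolated if for every $x\in G$, $x^p\in H$ implies $x\in H$. For $\alpha\in\mathbb{Z}_p$, $x^\alpha$ is the $p$-adic power. *)

(* Defs.v *)
From HB Require Import structures.
From mathcomp Require Import all_boot all_order all_algebra.
From mathcomp Require Import all_classical all_reals all_analysis.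
Set Implicit Arguments. Unset Strict Implicit. Unset Printing Implicit Defensive.
Local Open Scope classical_set_scope.

Section ProP.
Variables (G : ptopologicalType) (mul : G -> G -> G) (inv : G -> G) (one : G).

Definition group_axioms :=
  [/\ forall x y z, mul x (mul y z) = mul (mul x y) z,
      forall x, mul one x = x, forall x, mul x one = x,
      forall x, mul (inv x) x = one & forall x, mul x (inv x) = one].

Definition topological_group :=
  [/\ group_axioms, continuous (fun xy : G * G => mul xy.1 xy.2)
    & continuous inv].

Fixpoint gpow (x : G) (n : nat) : G :=
  if n is m.+1 then mul x (gpow x m) else one.

Definition subgroup (H : set G) :=
  [/\ H one, forall x y, H x -> H y -> H (mul x y) & forall x, H x -> H (inv x)].

Definition normal (N : set G) :=
  subgroup N /\ forall g x, N x -> N (mul (mul g x) (inv g)).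

(* the subgroup N of G has (finite) index n: there are n representatives
   of pairwise distinct left cosets covering G *)
Definition has_index (N : set G) (n : nat) :=
  exists s : seq G, [/\ size s = n,
    forall g, exists2 r, r \in s & N (mul (inv r) g)
  & forall i j, (i < n)%N -> (j < n)%N ->
      N (mul (inv (nth one s i)) (nth one s j)) -> i = j].

Definition finite_index (N : set G) := exists n, has_index N n.

Definition pro_p_group (p : nat) :=
  [/\ prime p, topological_group, hausdorff_space G,
      compact [set: G] /\ totally_disconnected [set: G]
    & forall N : set G, open N -> normal N -> exists k, has_index N (p ^ k)%N].

Definition tgen (s : seq G) : set G :=
  \bigcap_(K in [set K : set G | [/\ subgroup K, closed K
                   & forall x, x \in s -> K x]]) K.

Definition fg_closed_subgroup (H : set G) :=
  [/\ subgroup H, closed H & exists s : seq G, H = tgen s].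

Definition rel_open (H K : set G) := exists U : set G, open U /\ K = U `&` H.

Definition maximal_open_subgroup (H K : set G) :=
  [/\ subgroup K, K `<=` H, rel_open H K, K <> H
    & forall L : set G, subgroup L -> K `<=` L -> L `<=` H -> L = K \/ L = H].

Definition frattini (H : set G) : set G :=
  H `&` \bigcap_(K in [set K | maximal_open_subgroup H K]) K.

Definition frattini_injective :=
  forall H K : set G, fg_closed_subgroup H -> fg_closed_subgroup K ->
    frattini H = frattini K -> H = K.

Definition abelian := forall x y : G, mul x y = mul y x.

Definition virtually_abelian :=
  exists A : set G, [/\ subgroup A, finite_index A
    & forall x y, A x -> A y -> mul x y = mul y x].

Definition centralizer (x : G) : set G := [set g | mul g x = mul x g].

Definition isolated_subgroup (p : nat) (H : set G) :=
  forall x, H (gpow x p) -> H x.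

End ProP.

Record padic_int (p : nat) := MkZp {
  zp_seq : nat -> nat;
  zp_bound : forall n, (zp_seq n < p ^ n)%N;
  zp_compat : forall n, (zp_seq n.+1 %% p ^ n)%N = zp_seq n }.

Definition zp_nonzero p (a : padic_int p) := exists n, zp_seq a n <> 0%N.

Definition padic_pow (G : ptopologicalType) (mul : G -> G -> G) (one : G)
  p (x : G) (a : padic_int p) : G :=
  lim ((fun n => gpow mul one x (zp_seq a n)) @ \oo).

(* Main.v *)
From HB Require Import structures.
From mathcomp Require Import all_boot all_order all_algebra.
From mathcomp Require Import all_classical all_reals all_analysis.
From mathcomp Require Import all_fingroup all_solvable.
From mathcomp Require Import zify.
Set Implicit Arguments. Unset Strict Implicit. Unset Printing Implicit Defensive.
Require Import Defs.
Set Implicit Arguments. Unset Strict Implicit. Unset Printing Implicit Defensive.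
Lemma perm_lagrange (n : nat) (s : {perm 'I_n}) :
  (forall i m, iter m s i = i -> (s ^+ m)%g = 1%g) -> (s ^+ n)%g = 1%g.
Proof.
move=> H; apply/eqP; rewrite -order_dvdn.
have Hst i : ('C_(<[s]>)[i | 'P])%g = 1%g.
  apply/eqP; rewrite finset.eqEsubset sub1G andbT; apply/fintype.subsetP => t.
  rewrite inE => /andP[/cycleP[m ->]] /astab1P; rewrite /= apermE permX => /H ->.
  exact: group1.
have acts : [acts (<[s]>%g), on [set: 'I_n] | 'P] by apply/actsP => a _ x; rewrite !inE.
have := acts_sum_card_orbit acts.
rewrite cardsT => hn; rewrite -[X in _ %| X]card_ord -hn; apply: dvdn_sum => T /imsetP[i _ ->].
by rewrite orderE -(card_orbit_stab 'P _ i) Hst cards1 muln1.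
Qed.
Lemma bezout c e : 0 < c -> coprime c e -> exists a b, a * c = b * e + 1.
Proof.
move=> c0 co; case: (egcdnP e c0) => km kn h _; exists km, kn.
by rewrite h (eqP co).
Qed.

Lemma zp_modE p (a : padic_int p) m k : zp_seq a (m + k) %% p ^ m = zp_seq a m.
Proof.
elim: k => [|k IH]; first by rewrite addn0 modn_small ?zp_bound.
rewrite addnS -(modn_dvdm _ (dvdn_exp2l p (leq_addr k m))) zp_compat; exact: IH.
Qed.

Lemma zp_decomp p (a : padic_int p) m n : m <= n ->
  zp_seq a n = zp_seq a m + (zp_seq a n %/ p ^ m) * p ^ m.
Proof.
move=> mn; have := zp_modE a m (n - m); rewrite subnKC // => h.
by rewrite {1}(divn_eq (zp_seq a n) (p ^ m)) h addnC.
Qed.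

Lemma zp_val p (a : padic_int p) : prime p -> zp_nonzero a ->
  exists v n0, forall n, n0 <= n -> exists b, zp_seq a n = p ^ v * b /\ coprime p b.
Proof.
move=> pp [n0 nz]; have a0 : 0 < zp_seq a n0 by rewrite lt0n; apply/eqP.
have [u0 cu0 hu] := pfactor_coprime pp a0; set v := logn p _ in hu.
have vlt : v < n0.
  rewrite -(ltn_exp2l _ _ (prime_gt1 pp)); apply: leq_ltn_trans (zp_bound a n0).
  have u0p : 0 < u0 by move: a0; rewrite hu muln_gt0 => /andP[].
  by rewrite hu leq_pmull.
exists v, n0 => n hn; rewrite (zp_decomp a hn) hu.
set c := _ %/ _.
have e : p ^ n0 = p ^ (n0 - v).-1 * p * p ^ v.
  rewrite -expnSr prednK ?subn_gt0 // -expnD subnK //; exact: ltnW.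
exists (u0 + c * (p ^ (n0 - v).-1 * p)); split.
  by rewrite e mulnA [p ^ v * _]mulnC mulnDl; congr (_ + _); rewrite mulnA.
by rewrite -coprime_modr addnC mulnA modnMDl coprime_modr.
Qed.

Local Open Scope classical_set_scope.
Section Alg.
Variables (G : ptopologicalType) (mul : G -> G -> G) (inv : G -> G) (one : G).
Hypothesis GA : group_axioms mul inv one.

Let mulA : forall x y z, mul x (mul y z) = mul (mul x y) z. Proof. by case: GA. Qed.
Let mul1g : forall x, mul one x = x. Proof. by case: GA. Qed.
Let mulg1 : forall x, mul x one = x. Proof. by case: GA. Qed.
Let mulVg : forall x, mul (inv x) x = one. Proof. by case: GA. Qed.
Let mulgV : forall x, mul x (inv x) = one. Proof. by case: GA. Qed.

Lemma g_mulKg x y : mul (inv x) (mul x y) = y.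
Proof. by rewrite mulA mulVg mul1g. Qed.
Lemma g_mulKVg x y : mul x (mul (inv x) y) = y.
Proof. by rewrite mulA mulgV mul1g. Qed.
Lemma g_mulgK x y : mul (mul y x) (inv x) = y.
Proof. by rewrite -mulA mulgV mulg1. Qed.
Lemma g_mulgKV x y : mul (mul y (inv x)) x = y.
Proof. by rewrite -mulA mulVg mulg1. Qed.
Lemma g_mulI x y z : mul x y = mul x z -> y = z.
Proof. by move=> h; rewrite -(g_mulKg x y) h g_mulKg. Qed.
Lemma g_mulIr x y z : mul y x = mul z x -> y = z.
Proof. by move=> h; rewrite -(g_mulgK x y) h g_mulgK. Qed.
Lemma g_invK x : inv (inv x) = x.
Proof. by apply: (@g_mulI (inv x)); rewrite mulgV mulVg. Qed.
Lemma g_invM x y : inv (mul x y) = mul (inv y) (inv x).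
Proof. by apply: (@g_mulI (mul x y)); rewrite mulgV -mulA g_mulKVg mulgV. Qed.
Lemma g_inv1 : inv one = one.
Proof. by rewrite -{2}(mulVg one) mulg1. Qed.
Lemma g_inv_eq1 x y : mul (inv x) y = one -> x = y.
Proof. by move=> h; rewrite -(g_mulKVg x y) h mulg1. Qed.

Lemma gpowD x m n : gpow mul one x (m + n) = mul (gpow mul one x m) (gpow mul one x n).
Proof. by elim: m => [|m IH] /=; rewrite ?mul1g // IH mulA. Qed.
Lemma gpowSr x n : gpow mul one x n.+1 = mul (gpow mul one x n) x.
Proof. by rewrite -addn1 gpowD /= mulg1. Qed.
Lemma gpowM x m n : gpow mul one x (m * n) = gpow mul one (gpow mul one x m) n.
Proof. by elim: n => [|n IH]; rewrite ?muln0 // mulnS gpowD IH. Qed.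
Lemma gpow1 n : gpow mul one one n = one.
Proof. by elim: n => //= n ->; rewrite mulg1. Qed.
Lemma gpow_1 x : gpow mul one x 1 = x.
Proof. by rewrite /= mulg1. Qed.
Lemma gpow_commute x y n : mul x y = mul y x ->
  mul (gpow mul one x n) y = mul y (gpow mul one x n).
Proof.
move=> c; elim: n => [|n IH] /=; first by rewrite mul1g mulg1.
by rewrite -mulA IH !mulA c.
Qed.
Lemma gpow_mulC x y n : mul x y = mul y x ->
  gpow mul one (mul x y) n = mul (gpow mul one x n) (gpow mul one y n).
Proof.
move=> c; elim: n => [|n IH] /=; first by rewrite mulg1.
rewrite IH -!mulA; congr (mul x); rewrite !mulA; congr (mul _ _).
by rewrite (gpow_commute n c).
Qed.
Lemma gpow_conj g x n : gpow mul one (mul (mul g x) (inv g)) n =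
  mul (mul g (gpow mul one x n)) (inv g).
Proof.
elim: n => [|n IH] /=; first by rewrite mulg1 mulgV.
by rewrite IH -!mulA g_mulKg.
Qed.
Lemma gpow_inv x n : gpow mul one (inv x) n = inv (gpow mul one x n).
Proof.
elim: n => [|n IH] /=; first by rewrite g_inv1.
by rewrite IH -g_invM -gpowSr.
Qed.

Lemma subgroup_pow H x n : subgroup mul inv one H -> H x -> H (gpow mul one x n).
Proof. by case=> H1 HM _ Hx; elim: n => //= n IH; apply: HM. Qed.

Section SG.
Variable N : set G.
Hypothesis sN : subgroup mul inv one N.
Let N1 : N one. Proof. by case: sN. Qed.
Let NM : forall x y, N x -> N y -> N (mul x y). Proof. by case: sN. Qed.
Let NV : forall x, N x -> N (inv x). Proof. by case: sN. Qed.

Lemma sg_trans a b c : N (mul (inv a) b) -> N (mul (inv b) c) -> N (mul (inv a) c).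
Proof. by move=> h1 h2; have := NM h1 h2; rewrite -mulA g_mulKVg. Qed.
Lemma sg_sym a b : N (mul (inv a) b) -> N (mul (inv b) a).
Proof. by move/NV; rewrite g_invM g_invK. Qed.
Lemma sg_refl a : N (mul (inv a) a).
Proof. by rewrite mulVg. Qed.
Lemma sg_invE a : N a -> N (inv a). Proof. exact: NV. Qed.
Lemma sg_invE' a : N (inv a) -> N a. Proof. by move/NV; rewrite g_invK. Qed.
End SG.

Lemma normal_conj N g y : normal mul inv one N -> N y -> N (mul (mul g y) (inv g)).
Proof. by case=> _ h; apply: h. Qed.
Lemma normal_conjV N g y : normal mul inv one N -> N y -> N (mul (mul (inv g) y) g).
Proof. by move=> nN /(normal_conj (inv g) nN); rewrite g_invK. Qed.

Lemma index_pow N n x : normal mul inv one N -> has_index mul inv one N n ->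
  N (gpow mul one x n).
Proof.
move=> nN [s [sz cov dis]]; have sN := nN.1.
have cP g : {i : 'I_n | N (mul (inv (nth one s i)) g)}.
  apply: cid; have [r rs Nr] := cov g.
  have hi : index r s < n by rewrite -sz index_mem.
  by exists (Ordinal hi); rewrite /= nth_index.
pose c g := sval (cP g).
have cE g : N (mul (inv (nth one s (c g))) g) by rewrite /c; case: (cP g).
have cU g (i : 'I_n) : N (mul (inv (nth one s i)) g) -> c g = i.
  move=> h; apply: val_inj; apply: dis; try exact: ltn_ord.
  exact: (sg_trans sN (cE g) (sg_sym sN h)).
pose f (i : 'I_n) := c (mul x (nth one s i)).
have finj : injective f.
  move=> i j fij; apply: val_inj; apply: dis; try exact: ltn_ord.
  have h1 := cE (mul x (nth one s i)); have h2 := cE (mul x (nth one s j)).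
  rewrite -/(f i) fij -/(f j) in h1.
  have := sg_trans sN (sg_sym sN h1) h2.
  by rewrite g_invM -mulA g_mulKg.
pose sg := perm finj.
have iterE m i : N (mul (inv (nth one s (iter m sg i))) (mul (gpow mul one x m) (nth one s i))).
  elim: m => [|m IH] /=; first by rewrite mul1g; apply: sg_refl.
  rewrite permE /f; set j := iter m sg i.
  have h := cE (mul x (nth one s j)).
  have h2 : N (mul (inv (mul x (nth one s j))) (mul x (mul (gpow mul one x m) (nth one s i)))).
    by rewrite g_invM -mulA g_mulKg.
  by rewrite -mulA; apply: (sg_trans sN h h2).
case: n sz cov dis cP c cE cU f finj sg iterE => [|n] sz cov dis cP c cE cU f finj sg iterE.
  by case: (cP one) => -[].
have key : forall i m, iter m sg i = i -> (sg ^+ m)%g = 1%g.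
  move=> i m hm; have := iterE m i; rewrite hm => /(normal_conj (nth one s i) nN).
  rewrite g_mulKVg g_mulgK => Nxm.
  apply/permP => j; rewrite permX perm1.
  have h' := normal_conjV (nth one s j) nN Nxm; rewrite -mulA in h'.
  apply: val_inj; apply: dis; try exact: ltn_ord.
  exact: (sg_trans sN (iterE m j) (sg_sym sN h')).
have h : iter n.+1 sg ord0 = ord0.
  by rewrite -permX (perm_lagrange key) perm1.
 have H0 := iterE n.+1 ord0; rewrite h in H0.
have := normal_conj (nth one s (@ord0 n)) nN H0.
by rewrite g_mulKVg g_mulgK.
Qed.

End Alg.

Section ZD.
Variable (G : ptopologicalType).
Hypothesis hG : hausdorff_space G.
Hypothesis cG : compact [set: G].
Hypothesis tdG : totally_disconnected [set: G].

Lemma closed_from' (K : set G) : (forall g, ~ K g -> nbhs g (~` K)) -> closed K.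
Proof.
move=> h; rewrite -(setCK K); apply: open_closedC; rewrite openE => g Kg.
exact: h.
Qed.

Section Q.
Variable x : G.
Let Q := [set z | forall U : set G, clopen U -> U x -> U z].

Let Qclosed : closed Q.
Proof.
apply: closed_from' => z /existsNP[U /not_implyP[cU /not_implyP[Ux nUz]]].
apply: (@filterS _ _ _ (~` U)); last first.
  by apply: open_nbhs_nbhs; split => //; apply: closed_openC; case: cU.
by move=> w nUw Qw; apply: nUw; apply: Qw.
Qed.

Let clopen_sep (K : set G) : closed K -> Q `&` K = set0 ->
  exists C, [/\ clopen C, C x & C `&` K = set0].
Proof.
move=> clK QK; apply: contrapT => hn.
have ne : forall C, clopen C /\ C x -> C `&` K !=set0.
  move=> C [cC Cx]; apply/set0P/negP => /eqP CK; apply: hn; by exists C.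
pose F := filter_from [set C : set G | clopen C /\ C x] (fun C => C `&` K).
have FF : Filter F.
  apply: filter_from_filter; first by exists setT; split => //; exact: clopenT.
  move=> A B [cA Ax] [cB Bx]; exists (A `&` B); first by split; [exact: clopenI|].
  by move=> w [[Aw Bw] Kw].
have PF : ProperFilter F by apply: filter_from_proper => C hC; apply: ne.
have cK : compact K by apply: (subclosed_compact clK cG).
have [|z [Kz clz]] := cK F PF.
  by exists setT; [split => //; exact: clopenT| move=> w []].
suff Qz : Q z by move: QK; rewrite -subset0 => /(_ z); apply.
move=> U cU Ux; apply: contrapT => nUz.
have [w [[Uw _] nUw]] : ((U `&` K) `&` (~` U)) !=set0.
  apply: clz; first by exists U.
  by apply: open_nbhs_nbhs; split => //; apply: closed_openC; case: cU.
exact: nUw.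
Qed.

Lemma Q_connected : connected Q.
Proof.
move=> B [b0 hb0] [Op oO BE] [D cD BD].
have QB : B `<=` Q by rewrite BE => w [].
have clB : closed B by rewrite BD; apply: closedI.
pose A2 := Q `&` ~` Op.
have clA2 : closed A2 by apply: closedI => //; apply: open_closedC.
have nrm := compact_normal hG cG.
have snb : set_nbhs B (~` A2).
  apply/set_nbhsP; exists Op; split => //; first by rewrite BE => w [].
  by move=> w Ow [_]; apply.
have [C snC clC] := nrm B clB _ snb.
have [U1 [oU1 BU1 U1C]] := (set_nbhsP _ _).1 snC.
pose U2 := ~` closure C.
have oU2 : open U2 by apply: closed_openC; apply: closed_closure.
have A2U2 : A2 `<=` U2 by move=> w A2w clw; exact: (clC w clw A2w).
have U12 : forall w, U1 w -> U2 w -> False.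
  by move=> w /U1C /subset_closure ? ?.
have QU : forall w, Q w -> U1 w \/ U2 w.
  move=> w Qw; have [Ow|nOw] := pselect (Op w).
    by left; apply: BU1; rewrite BE.
  by right; apply: A2U2.
have h1 : closed (~` (U1 `|` U2)) by apply: open_closedC; apply: openU.
have h2 : Q `&` ~` (U1 `|` U2) = set0.
  by rewrite -subset0 => w [Qw]; apply; case: (QU w Qw); [left|right].
have [C0 [[oC0 clC0] C0x C0K]] := clopen_sep h1 h2.
have C0U : forall w, C0 w -> U1 w \/ U2 w.
  move=> w C0w; apply: contrapT => /not_orP[k1 k2].
  by move: C0K; rewrite -subset0 => /(_ w); apply; split => // -[].
have Qx : Q x by [].
have [Bx|nBx] := pselect (B x).
  apply/seteqP; split => // w Qw.
  have cl1 : clopen (C0 `&` U1).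
    split; first exact: openI.
    have -> : C0 `&` U1 = C0 `&` ~` U2.
      apply/seteqP; split => v [C0v h]; split => //.
        by move=> U2v; apply: (U12 v).
      by case: (C0U v C0v).
    by apply: closedI => //; apply: open_closedC.
  have [C0w U1w] := Qw _ cl1 (conj C0x (BU1 x Bx)).
  have [Ow|nOw] := pselect (Op w); first by rewrite BE.
  by exfalso; apply: (U12 w U1w); apply: A2U2.
exfalso.
have U2x : U2 x.
  apply: A2U2; split => // Ox; apply: nBx; rewrite BE; split.
  exact: Qx. exact: Ox.
have cl2 : clopen (C0 `&` U2).
  split; first exact: openI.
  have -> : C0 `&` U2 = C0 `&` ~` U1.
    apply/seteqP; split => v [C0v h]; split => //.
      by move=> U1v; apply: (U12 v).
    by case: (C0U v C0v).
  by apply: closedI => //; apply: open_closedC.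
have [_ U2b] := QB b0 hb0 _ cl2 (conj C0x U2x).
exact: (U12 b0 (BU1 b0 hb0) U2b).
Qed.
End Q.

Lemma zero_dim : zero_dimensional G.
Proof.
move=> x y /eqP xny; apply: contrapT => hn.
have Qy : forall U : set G, clopen U -> U x -> U y.
  move=> U cU Ux; apply: contrapT => nUy; apply: hn; exists U; by split.
pose Q := [set z | forall U : set G, clopen U -> U x -> U z].
have : Q `<=` connected_component [set: G] x.
  apply: connected_component_max; [by move=> U _ Ux| by [] | exact: Q_connected].
rewrite tdG // => /(_ y Qy) yx; by apply: xny.
Qed.
End ZD.


Section Top.
Variables (G : ptopologicalType) (mul : G -> G -> G) (inv : G -> G) (one : G).
Hypothesis HC : continuous (fun xy : G * G => mul xy.1 xy.2).
Hypothesis HI : continuous inv.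

Lemma near_mul a b (W : set G) : nbhs (mul a b) W ->
  \forall x \near a & y \near b, W (mul x y).
Proof. move=> hW; exact: (@HC (a, b) _ hW). Qed.

Lemma nbhs_mull a b (W : set G) : nbhs (mul a b) W -> nbhs b [set y | W (mul a y)].
Proof.
move=> /near_mul [[A B] /= [nA nB]] sub.
by apply: filterS nB => y By; apply: (sub (a, y)); split => //; apply: nbhs_singleton.
Qed.
Lemma nbhs_mulr a b (W : set G) : nbhs (mul a b) W -> nbhs a [set x | W (mul x b)].
Proof.
move=> /near_mul [[A B] /= [nA nB]] sub.
by apply: filterS nA => y Ay; apply: (sub (y, b)); split => //; apply: nbhs_singleton.
Qed.
Lemma nbhs_inv a (W : set G) : nbhs (inv a) W -> nbhs a [set x | W (inv x)].
Proof. by move=> hW; exact: (@HI a _ hW). Qed.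

Lemma closed_from (K : set G) : (forall g, ~ K g -> nbhs g (~` K)) -> closed K.
Proof.
move=> h; rewrite -(setCK K); apply: open_closedC; rewrite openE => g Kg.
exact: h.
Qed.

Hypothesis hG : hausdorff_space G.
Lemma hsep (p q : G) : p <> q -> exists A B : set G, [/\ nbhs p A, nbhs q B & forall z, A z -> B z -> False].
Proof.
move=> npq; apply: contra_notP npq => h; apply: hG => A B nA nB.
apply: contra_notP h => h2; exists A, B; split => // z Az Bz; by apply: h2; exists z.
Qed.

Hypothesis GA : group_axioms mul inv one.
Let mulA : forall x y z, mul x (mul y z) = mul (mul x y) z. Proof. by case: GA. Qed.
Let mul1g : forall x, mul one x = x. Proof. by case: GA. Qed.
Let mulg1 : forall x, mul x one = x. Proof. by case: GA. Qed.
Let mulVg : forall x, mul (inv x) x = one. Proof. by case: GA. Qed.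
Let mulgV : forall x, mul x (inv x) = one. Proof. by case: GA. Qed.

Lemma open_subgroup (H : set G) : subgroup mul inv one H -> nbhs one H -> open H.
Proof.
move=> sH nH; rewrite openE => h Hh.
have : nbhs (mul (inv h) h) H by rewrite mulVg.
move/nbhs_mull; apply: filterS => y /= Hy.
by rewrite -(g_mulKVg GA h y); case: sH => _ HM _; apply: HM.
Qed.

Lemma relopen_closed (H K U : set G) : subgroup mul inv one H -> closed H ->
  subgroup mul inv one K -> open U -> K = U `&` H -> closed K.
Proof.
move=> sH cH sK oU KE; apply: closed_from => g nKg.
have [Hg|nHg] := pselect (H g); last first.
  apply: (@filterS _ _ _ (~` H)); first by move=> y nHy Ky; apply: nHy; rewrite KE in Ky; case: Ky.
  by apply: open_nbhs_nbhs; split => //; apply: closed_openC.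
have K1 : K one by case: sK.
have : nbhs (mul (inv g) g) U.
  by rewrite mulVg; apply: open_nbhs_nbhs; split => //; rewrite KE in K1; case: K1.
move/nbhs_mull; apply: filterS => y /= Uy Ky; apply: nKg.
have Hy : H y by rewrite KE in Ky; case: Ky.
have Kgy : K (mul (inv g) y).
  rewrite KE; split => //; case: sH => _ HM HV; exact: HM (HV _ Hg) Hy.
have [_ KM KV] := sK.
have := KV _ Kgy; rewrite (g_invM GA) (g_invK GA) => h.
by have := KM _ _ Ky h; rewrite (g_mulKVg GA).
Qed.

Lemma centralizer_closed a : closed (centralizer mul a).
Proof.
apply: closed_from => g ng.
have [A [B [nA nB AB]]] := hsep ng.
have := nbhs_mulr nA; have := nbhs_mull nB => h1 h2.
by apply: filterS (filterI h1 h2) => y [/= By Ay] Cy; apply: (AB (mul y a)) => //; rewrite /centralizer /= in Cy; rewrite Cy.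
Qed.

Hypothesis cG : compact [set: G].
Hypothesis tdG : totally_disconnected [set: G].

Lemma basis_normal (W : set G) : nbhs one W ->
  exists N : set G, [/\ open N, normal mul inv one N & N `<=` W].
Proof.
move=> nW.
have [V [V1 [oV cV]] VW] : exists2 V : set G, V one /\ clopen V & V `<=` W.
  exact: (@zero_dimensional_cvg _ one hG (zero_dim hG cG tdG) cG _ nW).
have cpV : compact V by apply: (subclosed_compact cV cG).
have hB : nbhs one [set i | forall x, V x -> V (mul x i)].
  have := (compact_near_coveringP V).1 cpV G (nbhs one) (fun i x => V (mul x i)) _.
  apply => x Vx; apply: near_mul; rewrite mulg1.
  by apply: open_nbhs_nbhs; split.
pose H := [set g | forall x, V x -> V (mul x g) /\ V (mul x (inv g))].
have sH : subgroup mul inv one H.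
  split.
  - by move=> x Vx; rewrite (g_inv1 GA) mulg1.
  - move=> a b Ha Hb x Vx; have [h1 h2] := Ha x Vx.
    have [h3 _] := Hb _ h1; split; first by rewrite mulA.
    rewrite (g_invM GA) mulA; have [_ h4] := Hb _ Vx.
    by case: (Ha _ h4).
  - by move=> a Ha x Vx; have [h1 h2] := Ha x Vx; rewrite (g_invK GA).
have nH : nbhs one H.
  have h2 : nbhs one [set i | forall x, V x -> V (mul x (inv i))].
    by have := @nbhs_inv one [set j | forall x, V x -> V (mul x j)]; rewrite (g_inv1 GA); apply.
  by apply: filterS (filterI hB h2) => i [hi1 hi2] x Vx; split; [apply: hi1|apply: hi2].
have oH : open H by apply: open_subgroup.
have HV : H `<=` V by move=> g /(_ one V1) []; rewrite mul1g.
pose N := [set n | forall g, H (mul (mul g n) (inv g))].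
have nN : normal mul inv one N.
  have [H1 HM HI'] := sH.
  split; first split.
  - by move=> g; rewrite mulg1 mulgV.
  - move=> a b Na Nb g; have := HM _ _ (Na g) (Nb g).
    by rewrite -!mulA (g_mulKg GA).
  - move=> a Na g; have := HI' _ (Na g).
    by rewrite !(g_invM GA) (g_invK GA) mulA.
  - move=> g a Na h; have := Na (mul h g).
    by rewrite (g_invM GA) !mulA.
have hN : nbhs one [set i | forall x, [set: G] x -> H (mul (mul x i) (inv x))].
  apply: ((compact_near_coveringP [set: G]).1 cG G (nbhs one)
     (fun i x => H (mul (mul x i) (inv x))) _).
  move=> x _.
  have : nbhs (mul (mul x one) (inv x)) H.
    by rewrite mulg1 mulgV; apply: open_nbhs_nbhs; split => //; case: sH.
  move/near_mul => [[A1 B1] /= [nA1 nB1]] sub1.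
  have [[A2 B2] /= [nA2 nB2] sub2] := near_mul nA1.
  have nB3 := nbhs_inv nB1.
  exists (A2 `&` [set x' | B1 (inv x')], B2); first by split => //; apply: filterI.
  move=> [x' i] [/= [A2x' B1x'] B2i].
  by apply: (sub1 (mul x' i, inv x')); split => //; apply: (sub2 (x', i)).
have oN : open N.
  apply: open_subgroup; first exact: nN.1.
  by apply: filterS hN => i hi g; apply: hi.
exists N; split => // n Nn; apply/VW/HV.
by have := Nn one; rewrite mul1g (g_inv1 GA) mulg1.
Qed.

Variable p : nat.
Hypothesis Hp : prime p.
Hypothesis Hidx : forall N : set G, open N -> normal mul inv one N ->
  exists k, has_index mul inv one N (p ^ k).

Let p1 : 1 < p. Proof. exact: prime_gt1. Qed.

Lemma ppow N x : open N -> normal mul inv one N -> exists k, N (gpow mul one x (p ^ k)).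
Proof. by move=> oN nN; have [k hk] := Hidx oN nN; exists k; apply: index_pow. Qed.

Lemma open_normal_one N : open N -> normal mul inv one N -> nbhs one N.
Proof. by move=> oN [[N1 _ _] _]; apply: open_nbhs_nbhs. Qed.

Lemma closed_approx (D : set G) z : closed D ->
  (forall N, open N -> normal mul inv one N -> exists2 d, D d & N (mul (inv d) z)) -> D z.
Proof.
move=> cD h; apply: contrapT => nDz.
have : nbhs (mul z one) (~` D).
  by rewrite mulg1; apply: open_nbhs_nbhs; split => //; apply: closed_openC.
move/nbhs_mull => /basis_normal [N [oN nN NW]].
have [d Dd Nd] := h N oN nN.
have := NW _ (sg_sym GA nN.1 Nd); rewrite /= (g_mulKVg GA); exact.
Qed.

Lemma tgen_mem s x : x \in s -> tgen mul inv one s x.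
Proof. by move=> xs K [_ _]; apply. Qed.
Lemma tgen_min s (K : set G) : subgroup mul inv one K -> closed K ->
  (forall x, x \in s -> K x) -> tgen mul inv one s `<=` K.
Proof. by move=> sK cK h g; apply; split. Qed.
Lemma tgen_subgroup s : subgroup mul inv one (tgen mul inv one s).
Proof.
split.
- by move=> K [[]].
- by move=> a b ha hb K hK; case: (hK) => -[_ KM _] _ _; apply: KM; [apply: ha|apply: hb].
- by move=> a ha K hK; case: (hK) => -[_ _ KV] _ _; apply: KV; apply: ha.
Qed.
Lemma tgen_closed s : closed (tgen mul inv one s).
Proof.
apply: closed_from => g /existsNP[K /not_implyP[hK nKg]].
apply: (@filterS _ _ _ (~` K)); first by move=> y nKy ty; apply: nKy; apply: ty.
by apply: open_nbhs_nbhs; split => //; apply: closed_openC; case: hK.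
Qed.
Lemma tgen_fg s : fg_closed_subgroup mul inv one (tgen mul inv one s).
Proof. by split; [exact: tgen_subgroup|exact: tgen_closed|exists s]. Qed.

Lemma centralizer_subgroup a : subgroup mul inv one (centralizer mul a).
Proof.
rewrite /centralizer; split => /=.
- by rewrite mul1g mulg1.
- by move=> g h hg hh; rewrite -mulA hh !mulA hg.
- by move=> g hg; rewrite -{1}(g_mulgK GA g a) -hg -mulA (g_mulKg GA).
Qed.

Lemma tgen_one : tgen mul inv one [:: one] `<=` [set one].
Proof.
apply: tgen_min.
- split => //= [a b -> ->|a ->]; [exact: mulg1|exact: (g_inv1 GA)].
- exact: (accessible_closed_set1 (hausdorff_accessible hG)).
- by move=> x; rewrite inE => /eqP.
Qed.

Lemma tgen1_comm x a b : tgen mul inv one [:: x] a -> tgen mul inv one [:: x] b ->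
  mul a b = mul b a.
Proof.
have mx : tgen mul inv one [:: x] x by apply: tgen_mem; rewrite inE.
have hx : forall c, tgen mul inv one [:: x] c -> mul c x = mul x c.
  apply: tgen_min; [exact: centralizer_subgroup|exact: centralizer_closed|].
  by move=> y; rewrite inE => /eqP ->.
move=> ha hb; suff h : tgen mul inv one [:: x] `<=` centralizer mul a.
  by have := h b hb; rewrite /centralizer /= => ->.
apply: tgen_min; [exact: centralizer_subgroup|exact: centralizer_closed|].
by move=> y; rewrite inE => /eqP ->; rewrite /centralizer /= (hx a ha).
Qed.



Lemma normal_pow_approx N g q a : normal mul inv one N -> N q ->
  N (mul (inv (gpow mul one g a)) (gpow mul one (mul g q) a)).
Proof.
move=> nN Nq; have [[N1 NM NV] _] := nN.
elim: a => [|a IH] /=; first by rewrite (g_inv1 GA) mulg1.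
rewrite (g_invM GA) -!mulA (g_mulKg GA).
set r := mul (inv (gpow mul one g a)) _ in IH.
have -> : gpow mul one (mul g q) a = mul (gpow mul one g a) r by rewrite /r (g_mulKVg GA).
clearbody r; rewrite !mulA; apply: NM => //.
by have [_ hn] := nN; have := hn (inv (gpow mul one g a)) q Nq; rewrite (g_invK GA).
Qed.

Lemma coprime_gt0 b : coprime p b -> 0 < b.
Proof. by case: b => // /eqP; rewrite gcdn0 => e; move: p1; rewrite e. Qed.

Lemma pow_coprime_mem (L : set G) x c e : subgroup mul inv one L ->
  L (gpow mul one x e) -> L (gpow mul one x c) -> 0 < c -> coprime c e -> L x.
Proof.
move=> sL Le Lc c0 ce; have [a [b hab]] := bezout c0 ce.
have h1 : L (gpow mul one x (a * c)).
  by rewrite mulnC (gpowM GA); exact: (subgroup_pow a sL Lc).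
have h2 : L (gpow mul one x (b * e)).
  by rewrite mulnC (gpowM GA); exact: (subgroup_pow b sL Le).
move: h1; rewrite hab (gpowD GA) (gpow_1 GA) => h1.
have [_ LM LV] := sL; have := LM _ _ (LV _ h2) h1; by rewrite (g_mulKg GA).
Qed.

Lemma coprime_approx y w :
  (forall N, open N -> normal mul inv one N ->
     exists b, coprime p b /\ N (mul (inv w) (gpow mul one y b))) ->
  tgen mul inv one [:: w] y.
Proof.
move=> h; apply: closed_approx; first exact: tgen_closed.
move=> N oN nN; have [b [cb Nb]] := h N oN nN.
have [k Nk] := ppow y oN nN.
have b0 := coprime_gt0 cb.
have cb' : coprime b p by rewrite coprime_sym.
have [a [c hac]] := bezout b0 (coprimeXr k cb').
exists (gpow mul one w a).
  by apply: (subgroup_pow a (tgen_subgroup _)); apply: tgen_mem; rewrite inE.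
set q := mul (inv w) (gpow mul one y b) in Nb.
have e1 : gpow mul one y b = mul w q by rewrite /q (g_mulKVg GA).
have := normal_pow_approx w a nN Nb; rewrite -e1 -(gpowM GA) mulnC hac addnC.
rewrite (gpowD GA) (gpow_1 GA) => h2.
have NY : N (gpow mul one y (c * p ^ k)).
  by rewrite mulnC (gpowM GA); exact: (subgroup_pow c nN.1 Nk).
have [_ NM NV] := nN.1.
have := NM _ _ h2 (NV _ NY); rewrite -mulA (g_mulgK GA); exact.
Qed.

Section Phi.
Variable x : G.
Let H := tgen mul inv one [:: x].
Let P := tgen mul inv one [:: gpow mul one x p].
Let sH : subgroup mul inv one H. Proof. exact: tgen_subgroup. Qed.
Let cH : closed H. Proof. exact: tgen_closed. Qed.
Let sP : subgroup mul inv one P. Proof. exact: tgen_subgroup. Qed.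
Let cP : closed P. Proof. exact: tgen_closed. Qed.
Let Hx : H x. Proof. by apply: tgen_mem; rewrite inE. Qed.
Let Hpow n : H (gpow mul one x n). Proof. exact: (subgroup_pow n sH Hx). Qed.
Let Pxp : P (gpow mul one x p). Proof. by apply: tgen_mem; rewrite inE. Qed.
Let PH : P `<=` H.
Proof. by apply: tgen_min => // y; rewrite inE => /eqP ->. Qed.
Let Hc a b : H a -> H b -> mul a b = mul b a. Proof. exact: tgen1_comm. Qed.
Let HM a b : H a -> H b -> H (mul a b). Proof. by case: sH => _ + _; apply. Qed.
Let HV a : H a -> H (inv a). Proof. by case: sH => _ _; apply. Qed.
Let H1 : H one. Proof. by case: sH. Qed.

Lemma coprime_1pj j : coprime p (1 + p * j).
Proof. by rewrite -coprime_modr addnC mulnC modnMDl coprime_modr coprimen1. Qed.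

Lemma max_contains M : maximal_open_subgroup mul inv one H M -> P `<=` M.
Proof.
case=> sM MH [U [oU ME]] MneH maxM.
have cM : closed M by apply: (relopen_closed sH cH sM oU ME).
have [M1 MM MV] := sM.
suff Mxp : M (gpow mul one x p) by apply: tgen_min => // y; rewrite inE => /eqP ->.
have U1 : U one by move: M1; rewrite ME => -[].
have [N [oN nN NU]] := basis_normal (open_nbhs_nbhs (conj oU U1)).
have [k Nk] := ppow x oN nN.
set e := p ^ k in Nk.
have e0 : 0 < e by rewrite expn_gt0 prime_gt0.
have Me : M (gpow mul one x e) by rewrite ME; split; [exact: NU|exact: Hpow].
pose L := [set g | H g /\ exists j, M (mul g (gpow mul one x (p * j)))].
have sL : subgroup mul inv one L.
  split.
  - by split => //; exists 0; rewrite muln0 /= mulg1.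
  - move=> g h [Hg [j Mj]] [Hh [j' Mj']]; split; first exact: HM.
    exists (j + j'); rewrite mulnDr (gpowD GA).
    have -> : mul (mul g h) (mul (gpow mul one x (p * j)) (gpow mul one x (p * j'))) =
      mul (mul g (gpow mul one x (p * j))) (mul h (gpow mul one x (p * j'))).
      by rewrite -!mulA; congr (mul g); rewrite !mulA (Hc Hh (Hpow _)).
    exact: MM.
  - move=> g [Hg [j Mj]]; split; first exact: HV.
    exists (j * (e - 1)).
    have h1 := MV _ Mj; rewrite (g_invM GA) (Hc (HV (Hpow _)) (HV Hg)) in h1.
    have h2 : M (gpow mul one x (p * j * e)) by rewrite mulnC (gpowM GA); exact: (subgroup_pow _ sM Me).
    have := MM _ _ h1 h2.
    have -> : p * j * e = p * j + p * (j * (e - 1)).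
      by rewrite -mulnA -mulnDr mulnBr muln1 addnC subnK // leq_pmulr.
    by rewrite (gpowD GA) -mulA (g_mulKg GA).
have ML : M `<=` L by move=> g Mg; split; [exact: MH|exists 0; rewrite muln0 /= mulg1].
have LH : L `<=` H by move=> g [].
case: (maxM L sL ML LH) => LE.
  have : L (gpow mul one x p).
    split; first exact: Hpow.
    exists (e - 1); rewrite -(gpowD GA) -{1}(muln1 p) -mulnDr addnC subnK //.
    by rewrite mulnC (gpowM GA); exact: (subgroup_pow _ sM Me).
  by rewrite LE.
exfalso; apply: MneH; apply/seteqP; split => // g Hg.
have : L x by rewrite LE.
case=> _ [j Mj].
have Mx : M x.
  apply: (pow_coprime_mem sM Me (c := 1 + p * j)).
  - by rewrite (gpowD GA) (gpow_1 GA).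
  - by [].
  - by rewrite coprime_sym coprimeXl // coprime_1pj.
by apply: (tgen_min sM cM _ Hg) => y; rewrite inE => /eqP ->.
Qed.

Let mem i g := P (mul (inv (gpow mul one x i)) g).

Lemma closed_mem (pr : nat -> Prop) n : closed [set g | exists i, [/\ i < n, pr i & mem i g]].
Proof.
apply: closed_from => g ng.
suff : nbhs g [set y | forall i, i < n -> pr i -> ~ mem i y].
  by apply: filterS => y hy [i [hi pi mi]]; apply: (hy i).
have hg : forall i, i < n -> pr i -> ~ mem i g by move=> i hi pi mi; apply: ng; exists i.
elim: n hg {ng} => [|n IH] hg.
  by apply: filterS filterT => y _ i.
have h1 := IH (fun i hi => hg i (ltnW hi)).
have h2 : nbhs g [set y | pr n -> ~ mem n y].
  have [pn|npn] := pselect (pr n); last by apply: filterS filterT => y _ /npn.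
  have : nbhs (mul (inv (gpow mul one x n)) g) (~` P).
    by apply: open_nbhs_nbhs; split; [exact: closed_openC| exact: hg].
  by move/nbhs_mull; apply: filterS => y /= hy _.
apply: filterS (filterI h1 h2) => y [hy1 hy2] i; rewrite ltnS leq_eqVlt => /orP[/eqP ->|hi].
  exact: hy2.
exact: hy1.
Qed.

Lemma memH i g : mem i g -> H g.
Proof. by move=> mi; rewrite -(g_mulKVg GA (gpow mul one x i) g); apply: HM; [exact: Hpow|exact: PH]. Qed.


Let S := [set g | exists i, [/\ i < p, True & mem i g]].

Lemma Hkey a b q r : H a -> H b -> H q -> H r ->
  mul (mul (inv b) (inv a)) (mul (mul a q) (mul b r)) = mul q r.
Proof.
move=> Ha Hb Hq Hr.
by rewrite -!mulA (g_mulKg GA) mulA (Hc (HV Hb) Hq) -mulA (g_mulKg GA).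
Qed.

Lemma mem_mul i j g h : mem i g -> mem j h ->
  P (mul (inv (gpow mul one x (i + j))) (mul g h)).
Proof.
move=> mi mj; have [P1 PM PV] := sP.
have -> : mul g h = mul (mul (gpow mul one x i) (mul (inv (gpow mul one x i)) g))
   (mul (gpow mul one x j) (mul (inv (gpow mul one x j)) h)) by rewrite !(g_mulKVg GA).
rewrite (gpowD GA) (g_invM GA) Hkey; [exact: PM|exact: Hpow|exact: Hpow|exact: PH|exact: PH].
Qed.


Lemma coprime_lt i : 0 < i < p -> coprime i p.
Proof.
case/andP=> i0 ip; rewrite coprime_sym prime_coprime //; apply/negP => /(dvdn_leq i0).
by rewrite leqNgt ip.
Qed.

Lemma mem0 g : mem 0 g = P g.
Proof. by rewrite /mem /= (g_inv1 GA) mul1g. Qed.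

Lemma mem_pow (L : set G) i g : subgroup mul inv one L -> P `<=` L -> L g -> mem i g ->
  L (gpow mul one x i).
Proof.
move=> [L1 LM LV] PL Lg mi.
have := LM _ _ Lg (LV _ (PL _ mi)).
by rewrite (g_invM GA) (g_invK GA) (g_mulKVg GA).
Qed.

Lemma sS : subgroup mul inv one S.
Proof.
have [P1 PM PV] := sP.
split.
- by exists 0; split => //; [exact: (prime_gt0 Hp)|rewrite mem0].
- move=> g h [i [ip _ mi]] [j [jp _ mj]].
  have hm := mem_mul mi mj.
  case: (ltnP (i + j) p) => hij; first by exists (i + j).
  exists (i + j - p); split => //.
    by lia.
  have := PM _ _ Pxp hm; rewrite /mem.
  by rewrite -{1}(subnK hij) (gpowD GA) (g_invM GA) -mulA (g_mulKVg GA).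
- move=> g [i [ip _ mi]].
  case: (posnP i) => [i0|i0].
    by exists 0; split => //; [exact: (prime_gt0 Hp)|]; rewrite mem0; apply: PV; rewrite -mem0 -i0.
  exists (p - i); split => //; first by lia.
  have e : mul g (gpow mul one x (p - i)) = mul (mul (inv (gpow mul one x i)) g) (gpow mul one x p).
    rewrite -{1}(g_mulKVg GA (gpow mul one x i) g) (Hc (Hpow i) (PH mi)) -mulA -(gpowD GA).
    by rewrite subnKC // ltnW.
  by rewrite /mem -(g_invM GA) e; apply: PV; apply: PM.
Qed.

Lemma HS : H `<=` S.
Proof.
apply: tgen_min; [exact: sS| exact: closed_mem|].
move=> y; rewrite inE => /eqP ->; exists 1; split => //.
by rewrite /mem (gpow_1 GA) mulVg; case: sP.
Qed.

Lemma phi_eq : frattini mul inv one H = P.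
Proof.
apply/seteqP; split; last first.
  by move=> g Pg; split; [exact: PH| move=> K hK; exact: max_contains hK g Pg].
move=> g [Hg Fg].
case: (pselect (P = H)) => [PE|PneH]; first by rewrite PE.
have xnP : ~ P x.
  move=> Px; apply: PneH; apply/seteqP; split => //.
  by apply: tgen_min => // y; rewrite inE => /eqP ->.
have memnz i h : 0 < i < p -> mem i h -> P h -> False.
  move=> hi mi Ph; apply: xnP.
  apply: (pow_coprime_mem sP Pxp (c := i)); last exact: coprime_lt.
  - exact: (mem_pow sP (fun _ y => y) Ph mi).
  - by case/andP: hi.
apply: Fg; split.
- exact: sP.
- exact: PH.
- exists (~` [set g | exists i, [/\ i < p, 0 < i & mem i g]]); split.
    by apply: closed_openC; apply: closed_mem.
  apply/seteqP; split.
    move=> h Ph; split; last exact: PH.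
    by case=> i [ip i0 mi]; apply: (memnz i h) => //; rewrite i0.
  move=> h [Uh Hh]; have [i [ip _ mi]] := HS Hh.
  case: (posnP i) => [i0|i0]; first by rewrite -mem0 -i0.
  by exfalso; apply: Uh; exists i.
- exact: PneH.
- move=> L sL PL LH.
  case: (pselect (L `<=` P)) => [LP|nLP].
    by left; apply/seteqP; split.
  right; apply/seteqP; split => // h Hh.
  have [k /not_implyP [Lk nPk]] := (existsNP _).2 nLP.
  have [i [ip _ mi]] := HS (LH _ Lk).
  case: (posnP i) => [i0|i0]; first by exfalso; apply: nPk; rewrite -mem0 -i0.
  have Lx : L x.
    apply: (pow_coprime_mem sL (PL _ Pxp) (c := i)); last by apply: coprime_lt; rewrite i0.
    - exact: (mem_pow sL PL Lk mi).
    - exact: i0.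
  have [j [jp _ mj]] := HS Hh.
  have [_ LM _] := sL.
  rewrite -(g_mulKVg GA (gpow mul one x j) h); apply: LM.
    exact: (subgroup_pow j sL Lx).
  exact: PL.
Qed.

End Phi.

Hypothesis HF : frattini_injective mul inv one.

Lemma torsion_free t : gpow mul one t p = one -> t = one.
Proof.
move=> tp.
have E : tgen mul inv one [:: t] = tgen mul inv one [:: one].
  apply: HF; [exact: tgen_fg|exact: tgen_fg|].
  by rewrite !phi_eq tp (gpow1 GA).
have : tgen mul inv one [:: t] t by apply: tgen_mem; rewrite inE.
by rewrite E => /tgen_one.
Qed.

Lemma comm_inv a b : mul a b = mul b a -> mul a (inv b) = mul (inv b) a.
Proof.
move=> h; have [_ _ CV] := centralizer_subgroup a.
by have := CV b (esym h); rewrite /centralizer /= => ->.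
Qed.

Lemma root_uniq x y : gpow mul one x p = gpow mul one y p -> x = y.
Proof.
move=> h.
have E : tgen mul inv one [:: x] = tgen mul inv one [:: y].
  apply: HF; [exact: tgen_fg|exact: tgen_fg|].
  by rewrite !phi_eq h.
have Hx : tgen mul inv one [:: x] x by apply: tgen_mem; rewrite inE.
have Hy : tgen mul inv one [:: x] y by rewrite E; apply: tgen_mem; rewrite inE.
have cxy := tgen1_comm Hx Hy.
have cxy' : mul x (inv y) = mul (inv y) x by apply: comm_inv; rewrite -cxy.
have : mul x (inv y) = one.
  apply: torsion_free; rewrite (gpow_mulC GA _ cxy') (gpow_inv GA) -h.
  exact: mulgV.
by move=> e; rewrite -(g_mulgKV GA y x) e mul1g.
Qed.

Lemma isolated x g : mul (gpow mul one x p) g = mul g (gpow mul one x p) ->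
  mul x g = mul g x.
Proof.
move=> h.
have : mul (mul g x) (inv g) = x.
  apply: root_uniq; rewrite (gpow_conj GA) -h.
  exact: (g_mulgK GA).
by move=> e; rewrite -{1}e (g_mulgKV GA).
Qed.

Lemma isolated_iter k x g : mul (gpow mul one x (p ^ k)) g = mul g (gpow mul one x (p ^ k)) ->
  mul x g = mul g x.
Proof.
elim: k x => [|k IH] x; first by rewrite expn0 (gpow_1 GA).
rewrite expnSr (gpowM GA) => /isolated; exact: IH.
Qed.

Lemma root_iter k x y : gpow mul one x (p ^ k) = gpow mul one y (p ^ k) -> x = y.
Proof.
elim: k x y => [|k IH] x y; first by rewrite expn0 !(gpow_1 GA).
rewrite expnS !(gpowM GA) => /IH; exact: root_uniq.
Qed.

Lemma padic_spec x (a : padic_int p) N : open N -> normal mul inv one N ->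
  exists m, forall n, m <= n ->
    N (mul (inv (padic_pow mul one x a)) (gpow mul one x (zp_seq a n))).
Proof.
pose f n := gpow mul one x (zp_seq a n).
have key N' : open N' -> normal mul inv one N' ->
    exists m, forall n, m <= n -> N' (mul (inv (f m)) (f n)).
  move=> oN' nN'; have [k Nk] := ppow x oN' nN'; exists k => n kn.
  rewrite /f (zp_decomp a kn) (gpowD GA) (g_mulKg GA) mulnC (gpowM GA).
  exact: (subgroup_pow _ nN'.1 Nk).
have [L [_ clL]] := @cG (f @ \oo) _ filterT.
have cvL : f @ \oo --> L.
  move=> W; rewrite -[L in nbhs L]mulg1 => /nbhs_mull /basis_normal [N' [oN' nN' NW]].
  have [m hm] := key N' oN' nN'.
  have nB : nbhs L [set z | N' (mul (inv L) z)].
    have : nbhs (mul (inv L) L) N' by rewrite mulVg; exact: open_normal_one.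
    exact: nbhs_mull.
  have FA : (f @ \oo) [set z | exists2 n, m <= n & z = f n].
    by exists m => // n /= hn; exists n.
  have [z [[n0 hn0 ->] Nz]] := clL _ _ FA nB.
  exists m => // n /= hn.
  have := sg_trans GA nN'.1 (sg_trans GA nN'.1 Nz (sg_sym GA nN'.1 (hm n0 hn0))) (hm n hn).
  by move/NW; rewrite /= (g_mulKVg GA).
have pE : padic_pow mul one x a = L by apply: cvg_lim.
move=> oN nN; rewrite pE.
have nB : nbhs L [set z | N (mul (inv L) z)].
  have : nbhs (mul (inv L) L) N by rewrite mulVg; exact: open_normal_one.
  exact: nbhs_mull.
have [m _ hm] := cvL _ nB.
by exists m => n hn; apply: hm.
Qed.

Lemma fin_index_pow (A : set G) n x : subgroup mul inv one A ->
  has_index mul inv one A n -> exists m, 0 < m /\ A (gpow mul one x m).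
Proof.
move=> sA [s [sz cov dis]].
have cP (i : 'I_n.+1) : {j : 'I_n | A (mul (inv (nth one s j)) (gpow mul one x i))}.
  apply: cid; have [r rs Nr] := cov (gpow mul one x i).
  have hi : index r s < n by rewrite -sz index_mem.
  by exists (Ordinal hi); rewrite /= nth_index.
pose c i := sval (cP i).
have cE i : A (mul (inv (nth one s (c i))) (gpow mul one x i)) by rewrite /c; case: (cP i).
case: (boolP (injectiveb c)) => [/injectiveP inj|/injectivePn [i [j nij cij]]].
  by have := @leq_card _ _ c inj; rewrite !card_ord ltnn.
have h1 := cE i; have h2 := cE j; rewrite cij in h1.
have hij := sg_trans GA sA (sg_sym GA sA h1) h2.
have hji := sg_sym GA sA hij.
case: (ltngtP i j) => [lt|gt|eq]; last by move/val_inj: eq => eq; rewrite eq eqxx in nij.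
  exists (j - i); split; first by rewrite subn_gt0.
  have e : gpow mul one x j = mul (gpow mul one x i) (gpow mul one x (j - i)).
    by rewrite -(gpowD GA) subnKC // ltnW.
  by rewrite e (g_mulKg GA) in hij.
exists (i - j); split; first by rewrite subn_gt0.
have e : gpow mul one x i = mul (gpow mul one x j) (gpow mul one x (i - j)).
  by rewrite -(gpowD GA) subnKC // ltnW.
by rewrite e (g_mulKg GA) in hji.
Qed.

Lemma centr_tgen w z : mul w z = mul z w ->
  forall c, tgen mul inv one [:: w] c -> mul c z = mul z c.
Proof.
move=> h; apply: tgen_min; [exact: centralizer_subgroup|exact: centralizer_closed|].
by move=> y; rewrite inE => /eqP ->.
Qed.

Lemma coprime_const X u : coprime p u -> tgen mul inv one [:: gpow mul one X u] X.
Proof.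
move=> cu; apply: coprime_approx => N oN nN; exists u; split => //.
by rewrite mulVg; case: nN => -[].
Qed.

Lemma pow_decomp m : 0 < m -> exists k u, m = p ^ k * u /\ coprime p u.
Proof.
move=> m0; have [u cu e] := pfactor_coprime Hp m0.
by exists (logn p m), u; rewrite mulnC.
Qed.

Lemma comm_of_pows x y k k' :
  mul (gpow mul one x (p ^ k)) (gpow mul one y (p ^ k')) =
  mul (gpow mul one y (p ^ k')) (gpow mul one x (p ^ k)) -> mul x y = mul y x.
Proof.
move=> h.
have h1 : mul x (gpow mul one y (p ^ k')) = mul (gpow mul one y (p ^ k')) x.
  exact: (isolated_iter h).
by have := isolated_iter (esym h1) => ->.
Qed.

Lemma part_i : virtually_abelian mul inv one -> abelian mul.
Proof.
case=> A [sA [n hn] cA] x y.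
have [m [m0 Am]] := fin_index_pow x sA hn.
have [m' [m0' Am']] := fin_index_pow y sA hn.
have [k [u [em cu]]] := pow_decomp m0.
have [k' [u' [em' cu']]] := pow_decomp m0'.
set X := gpow mul one x (p ^ k); set Y := gpow mul one y (p ^ k').
have eX : gpow mul one x m = gpow mul one X u by rewrite em (gpowM GA).
have eY : gpow mul one y m' = gpow mul one Y u' by rewrite em' (gpowM GA).
have c0 := cA _ _ Am Am'; rewrite eX eY in c0.
have c1 := centr_tgen c0 (coprime_const (X:=X) cu).
have c2 := centr_tgen (esym c1) (coprime_const (X:=Y) cu').
by apply: (comm_of_pows (k := k) (k' := k')); rewrite -/X -/Y c2.
Qed.

Lemma padic_gen x (a : padic_int p) v n0 :
  (forall n, n0 <= n -> exists b, zp_seq a n = p ^ v * b /\ coprime p b) ->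
  tgen mul inv one [:: padic_pow mul one x a] (gpow mul one x (p ^ v)).
Proof.
move=> hv; apply: coprime_approx => N oN nN.
have [m hm] := padic_spec x a oN nN.
have [b [eb cb]] := hv (maxn m n0) (leq_maxr _ _).
exists b; split => //; rewrite -(gpowM GA) -eb; apply: hm; exact: leq_maxl.
Qed.

Lemma part_iii x y (al be : padic_int p) : zp_nonzero al -> zp_nonzero be ->
  mul (padic_pow mul one x al) (padic_pow mul one y be) =
  mul (padic_pow mul one y be) (padic_pow mul one x al) -> mul x y = mul y x.
Proof.
move=> nza nzb h.
have [v [n0 hv]] := zp_val Hp nza.
have [v' [n0' hv']] := zp_val Hp nzb.
have c1 := centr_tgen h (padic_gen (x:=x) hv).
have c2 := centr_tgen (esym c1) (padic_gen (x:=y) hv').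
by apply: (comm_of_pows (k := v) (k' := v')); rewrite c2.
Qed.

Lemma part_iv x y (al : padic_int p) : zp_nonzero al ->
  padic_pow mul one x al = padic_pow mul one y al -> x = y.
Proof.
move=> nza h.
have [v [n0 hv]] := zp_val Hp nza.
set w := padic_pow mul one x al in h.
have HX := padic_gen (x:=x) hv; have HY := padic_gen (x:=y) hv.
rewrite -/w -h in HY.
set X := gpow mul one x (p ^ v) in HX *; set Y := gpow mul one y (p ^ v) in HY *.
have cXY := tgen1_comm HX HY.
have cXY' : mul X (inv Y) = mul (inv Y) X by apply: comm_inv; rewrite -cXY.
suff : tgen mul inv one [:: one] (mul X (inv Y)).
  move/tgen_one => /= e; apply: (root_iter (k := v)).
  by rewrite -/X -/Y -(g_mulgKV GA Y X) e mul1g.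
apply: coprime_approx => N oN nN.
have [m1 hm1] := padic_spec x al oN nN.
have [m2 hm2] := padic_spec y al oN nN.
set n := maxn (maxn m1 m2) n0.
have [b [eb cb]] := hv n (leq_maxr _ _).
exists b; split => //.
rewrite (g_inv1 GA) mul1g (gpow_mulC GA _ cXY') (gpow_inv GA) /X /Y -!(gpowM GA) -eb.
have q1 := hm1 n (leq_trans (leq_maxl _ _) (leq_maxl _ _)).
have q2 := hm2 n (leq_trans (leq_maxr _ _) (leq_maxl _ _)).
rewrite -/w -h in q2.
set A1 := gpow mul one x _ in q1 *; set A2 := gpow mul one y _ in q2 *.
have [[N1 NM NV] _] := nN.
have := normal_conj w nN (NM _ _ q1 (NV _ q2)).
by rewrite -/w (g_invM GA) (g_invK GA) -!mulA (g_mulKVg GA) mulgV mulg1.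
Qed.

Lemma main_all x y (al be : padic_int p) : zp_nonzero al -> zp_nonzero be ->
  [/\ virtually_abelian mul inv one -> abelian mul,
      forall g : G, isolated_subgroup mul one p (centralizer mul g),
      mul (padic_pow mul one x al) (padic_pow mul one y be)
        = mul (padic_pow mul one y be) (padic_pow mul one x al) ->
        mul x y = mul y x
    & padic_pow mul one x al = padic_pow mul one y al -> x = y].
Proof.
move=> na nb; split.
- exact: part_i.
- by move=> g z hz; apply: isolated.
- exact: part_iii.
- exact: part_iv.
Qed.
End Top.

Theorem mainTheorem13 (p : nat) (G : ptopologicalType)
  (mul : G -> G -> G) (inv : G -> G) (one : G)
  (HG : pro_p_group mul inv one p)
  (HF : frattini_injective mul inv one)
  (x y : G) (alpha beta : padic_int p)
  (Ha : zp_nonzero alpha) (Hb : zp_nonzero beta) :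
  [/\ virtually_abelian mul inv one -> abelian mul,
      forall g : G, isolated_subgroup mul one p (centralizer mul g),
      mul (padic_pow mul one x alpha) (padic_pow mul one y beta)
        = mul (padic_pow mul one y beta) (padic_pow mul one x alpha) ->
        mul x y = mul y x
    & padic_pow mul one x alpha = padic_pow mul one y alpha -> x = y].
Proof.
case: HG => Hp [GA HC HI] hG [cG tdG] Hidx.
exact: (main_all HC HI hG GA cG tdG Hp Hidx HF x y Ha Hb).
Qed.
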